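(* Let $X$ be an abelian metric group and let $f:X\to\mathbb{R}$ be a subadditive function. The following conditions are equivalent: (a) $f$ is locally bounded at some point; (b) $f$ is a WNT-function; (c) $f$ is bounded above on some shift-compact set; (d) $f$ is bounded on some shift-compact set.
   Context: An abelian metric group is an abelian topological group whose topology is given by an invariant metric. $f$ is subadditive if $f(x+y)\le f(x)+f(y)$ for all $x,y\in X$. A set $A\subset X$ is shift-compact if for every sequence $(x_n)$ tending to $0$ in $X$ there exists $x\in X$ such that $\{n\in\mathbb{N}: x+x_n\in A\}$ is infinite. Locally bounded at a point means $|f|$ is bounded on some neighbourhood of that point. For $k\in\mathbb{N}$ let $H^k:=f^{-1}((-k,k))$. $f$ is a WNT-function if for every convergent sequence $(u_n)_{n\in\mathbb{N}}$ in $X$ there exist $k\in\mathbb{N}$, an infinite set $\mathbb{M}\subset\mathbb{N}$ and $t\in X$ such that $\{t+u_m: m\in\mathbb{M}\}\subset H^k$. *)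

(* Defs.v *)
From HB Require Import structures.
From mathcomp Require Import all_boot all_order all_algebra.
From mathcomp Require Import boolp classical_sets cardinality reals.
Set Implicit Arguments. Unset Strict Implicit. Unset Printing Implicit Defensive.
Import Order.TTheory GRing.Theory Num.Theory.
Local Open Scope ring_scope.
Local Open Scope classical_set_scope.

Definition is_metric (R : realType) (X : Type) (d : X -> X -> R) : Prop :=
  [/\ (forall x y, d x y = 0 <-> x = y),
      (forall x y, d x y = d y x)
    & (forall x y z, d x z <= d x y + d y z)].

Definition invariant_metric (R : realType) (X : zmodType) (d : X -> X -> R) : Prop :=
  forall x y z, d (x + z) (y + z) = d x y.

Definition abelian_metric_group (R : realType) (X : zmodType) (d : X -> X -> R) : Prop :=
  is_metric d /\ invariant_metric d.

Definition seq_cvg_to (R : realType) (X : Type) (d : X -> X -> R)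
  (u : nat -> X) (l : X) : Prop :=
  forall e : R, 0 < e -> exists N : nat, forall n, (N <= n)%N -> d (u n) l < e.

Definition subadditive (R : realType) (X : zmodType) (f : X -> R) : Prop :=
  forall x y, f (x + y) <= f x + f y.

Definition shift_compact (R : realType) (X : zmodType) (d : X -> X -> R)
  (A : set X) : Prop :=
  forall u : nat -> X, seq_cvg_to d u 0 ->
    exists x : X, ~ finite_set [set n : nat | A (x + u n)].

Definition locally_bounded_at (R : realType) (X : Type) (d : X -> X -> R)
  (f : X -> R) (x0 : X) : Prop :=
  exists r : R, 0 < r /\ exists M : R, forall y, d y x0 < r -> `|f y| <= M.

Definition Hk (R : realType) (X : Type) (f : X -> R) (k : nat) : set X :=
  [set x | - (k%:R) < f x < k%:R].

Definition WNT_function (R : realType) (X : zmodType) (d : X -> X -> R)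
  (f : X -> R) : Prop :=
  forall u : nat -> X, (exists l, seq_cvg_to d u l) ->
    exists (k : nat) (MM : set nat) (t : X),
      ~ finite_set MM /\ (forall m, MM m -> Hk f k (t + u m)).

Definition bounded_above_on (R : realType) (X : Type) (f : X -> R) (A : set X) : Prop :=
  exists M : R, forall x, A x -> f x <= M.

Definition bounded_on (R : realType) (X : Type) (f : X -> R) (A : set X) : Prop :=
  exists M : R, forall x, A x -> `|f x| <= M.

(* Main.v *)
Require Import Defs.
From HB Require Import structures.
From mathcomp Require Import all_boot all_order all_algebra.
From mathcomp Require Import boolp classical_sets cardinality reals.
From mathcomp Require Import lra.
Import Order.TTheory GRing.Theory Num.Theory.
Local Open Scope ring_scope.
Local Open Scope classical_set_scope.
Set Implicit Arguments.

Lemma infinite_ge (N : nat) : ~ finite_set [set n : nat | (N <= n)%N].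
Proof.
move=> fin; apply: infinite_nat.
apply: (@sub_finite_set _ _ ([set n : nat | (N <= n)%N] `|` `I_N)).
  move=> n _ /=; case: (leqP N n) => h; [by left | by right].
by rewrite finite_setU; split => //; apply: finite_II.
Qed.

Lemma infinite_unbounded (S : set nat) :
  ~ finite_set S -> forall N, exists n, S n /\ (N <= n)%N.
Proof.
move=> inf N; apply: contrapT => h; apply: inf.
apply: (sub_finite_set _ (finite_II N)) => n Sn /=.
rewrite ltnNge; apply/negP => le; by apply: h; exists n; split.
Qed.

Section S.
Variables (R : realType) (X : zmodType) (d : X -> X -> R) (f : X -> R).
Hypothesis hX : abelian_metric_group d.
Hypothesis hf : subadditive f.

Lemma f0_ge0 : 0 <= f 0.
Proof. have := hf 0 0; rewrite addr0 => h. by rewrite -(lerD2l (f 0)) addr0. Qed.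

Lemma dsym x y : d x y = d y x.
Proof. by case: hX => -[]. Qed.

Lemma dinv x y z : d (x + z) (y + z) = d x y.
Proof. by case: hX => _ /(_ x y z). Qed.

Lemma dneg y : d (- y) 0 = d y 0.
Proof. by rewrite -(dinv (- y) 0 y) addNr add0r dsym. Qed.

Lemma fshift x y C : f (x + y) <= C -> f y <= C + f (- x).
Proof.
move=> h; have := hf (x + y) (- x).
by rewrite addrC addKr => h2; apply: (le_trans h2); rewrite lerD2r.
Qed.

Lemma bounded_above_to_a :
  (exists r : R, 0 < r /\ exists K : R, forall y, d y 0 < r -> f y <= K) ->
  exists x0 : X, locally_bounded_at d f x0.
Proof.
move=> [r [r0 [K hK]]]; exists 0, r; split => //; exists K => y hy.
rewrite ler_norml; apply/andP; split; last exact: hK.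
have h1 := hf y (- y); rewrite subrr in h1.
have h2 : f (- y) <= K by apply: hK; rewrite dneg.
have := f0_ge0; move: h1 h2 => h1 h2 h3; lra.
Qed.

Lemma P_to_bounded :
  (forall u, seq_cvg_to d u 0 -> exists C, ~ finite_set [set n | f (u n) <= C]) ->
  exists r : R, 0 < r /\ exists K : R, forall y, d y 0 < r -> f y <= K.
Proof.
move=> P; apply: contrapT => nb.
have hu : forall n : nat, exists y, d y 0 < (n.+1%:R)^-1 /\ n%:R < f y.
  move=> n; apply: contrapT => hn; apply: nb; exists (n.+1%:R)^-1.
  split; first by rewrite invr_gt0 ltr0Sn.
  exists n%:R => y hy; rewrite leNgt; apply/negP => hlt; apply: hn; by exists y.
have [u hu'] := choice hu.
have cv : seq_cvg_to d u 0.
  move=> e e0; exists (Num.truncn e^-1).+1 => n hn.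
  case: (hu' n) => h _; apply: (lt_le_trans h).
  rewrite -[e]invrK lef_pV2 ?posrE ?invr_gt0 ?ltr0Sn //.
  apply: ltW; apply: (lt_le_trans (truncnS_gt _)); rewrite ler_nat.
  exact: leq_trans hn (leqnSn n).
have [C hC] := P u cv.
have [n [hn1 hn2]] := @infinite_unbounded _ hC (Num.truncn C).+1.
case: (hu' n) => _ h2.
have h3 : C < n%:R by apply: (lt_le_trans (truncnS_gt C)); rewrite ler_nat.
move: hn1 => /= hn1; lra.
Qed.
End S.

Theorem corollary3p8 (R : realType) (X : zmodType) (d : X -> X -> R)
  (f : X -> R) (hX : abelian_metric_group d) (hf : subadditive f) :
  let a := exists x0 : X, locally_bounded_at d f x0 in
  let b := WNT_function d f in
  let c := exists A : set X, shift_compact d A /\ bounded_above_on f A in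
  let e := exists A : set X, shift_compact d A /\ bounded_on f A in
  (a <-> b) /\ (b <-> c) /\ (c <-> e).
Proof.
move=> a b c e.
have ab : a -> b.
  move=> [x0 [r [r0 [M hM]]]] u [l hl].
  have [N hN] := hl r r0.
  exists (Num.truncn `|M|).+1, [set n | (N <= n)%N], (x0 - l); split.
    exact: infinite_ge.
  move=> m hm.
  have e1 : d (x0 - l + u m) x0 = d (u m) l.
    rewrite -(dinv hX (u m) l (x0 - l)); congr (d _ _); first by rewrite addrC.
    by rewrite addrC subrK.
  have hb := hM (x0 - l + u m); rewrite e1 in hb; have {}hb := hb (hN m hm).
  rewrite /Hk /= -ltr_norml; apply: (le_lt_trans hb).
  exact: le_lt_trans (ler_norm M) (truncnS_gt _).
have ba : b -> a.
  move=> hb; apply: (bounded_above_to_a hX hf); apply: P_to_bounded => u cv.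
  have [k [MM [t [inf hMM]]]] := hb u (ex_intro _ 0 cv).
  exists (k%:R + f (-t)) => fin; apply: inf; apply: sub_finite_set fin => m hm /=.
  apply: (fshift hf); have := hMM m hm; rewrite /Hk /= => /andP[_ h]; exact: ltW h.
have ae : a -> e.
  move=> [x0 [r [r0 [M hM]]]]; exists [set y | d y x0 < r]; split; last by exists M.
  move=> u cv; exists x0; have [N hN] := cv r r0; move=> fin; apply: (infinite_ge N).
  apply: sub_finite_set fin => n hn /=; rewrite addrC -[X in d _ X]add0r (dinv hX).
  exact: hN.
have ec : e -> c.
  move=> [A [hA [M hM]]]; exists A; split => //; exists M => x /hM; apply: le_trans.
  exact: ler_norm.
have ca : c -> a.
  move=> H; apply: (bounded_above_to_a hX hf); apply: P_to_bounded => u cv.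
  have [A [hA [M hM]]] := H; have [x hx] := hA u cv.
  exists (M + f (-x)) => fin; apply: hx; apply: sub_finite_set fin => n hn /=.
  apply: (fshift hf); exact: hM.
split; first by split.
split; split; auto.
Qed.
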